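(* Let $A$ be a metric space and let $a:\mathbb{R}^N\times A\to S^N$, $b:\mathbb{R}^N\times A\to\mathbb{R}^N$, $c:\mathbb{R}^N\times A\to\mathbb{R}$ be continuous. For $\alpha\in A$ set $L^\alpha u:=\mathrm{tr}(a(x,\alpha)D^2u)+b(x,\alpha)\cdot Du$ and $\tilde G[u]:=\sup_{\alpha\in A}\{-L^\alpha u+c(x,\alpha)u\}$. Assume: (i) $\tilde F(x,t,p,X)=\sup_{\alpha\in A}\{-\mathrm{tr}(a(x,\alpha)X)-b(x,\alpha)\cdot p+c(x,\alpha)t\}$ is continuous, $c\ge0$, and $\tilde G$ satisfies the Comparison Principle in every bounded open set $\Omega$ (a viscosity subsolution $u$ and supersolution $v$ of $\tilde G=0$ in $\Omega$ with $u\le v$ on $\partial\Omega$ satisfy $u\le v$ in $\Omega$); (ii) $\tilde G$ satisfies the Strong Minimum Principle: any viscosity supersolution of $\tilde G[v]=0$ in $\mathbb{R}^N$ that attains an interior nonpositive minimum is constant; (iii) there exist $R_o\ge0$ and an upper semicontinuous $W:\mathbb{R}^N\to\mathbb{R}$ with $\tilde G[W]\le0$ in the viscosity sense for $|x|>R_o$ and $\lim_{|x|\to\infty}W(x)=-\infty$. Let $v\in LSC(\mathbb{R}^N)$ be a viscosity supersolution of $\tilde G[v]\ge0$ in $\mathbb{R}^N$ such that $\limsup_{|x|\to\infty}\frac{v(x)}{W(x)}\le0$. If either $v\le0$ or $c\equiv0$, then $v$ is constant.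
   Context: $S^N$ denotes the space of real symmetric $N\times N$ matrices. Sub- and supersolutions are meant in the viscosity sense. *)

(* Defs.v *)
(* R^N is 'rV[R]_N, S^N is the set of symmetric 'M[R]_N. *)
From HB Require Import structures.
From mathcomp Require Import all_boot all_order all_algebra.
From mathcomp Require Import all_classical all_reals all_analysis.
Set Implicit Arguments. Unset Strict Implicit. Unset Printing Implicit Defensive.
Import Order.TTheory GRing.Theory Num.Theory.
Import numFieldNormedType.Exports.
Local Open Scope classical_set_scope.
Local Open Scope ring_scope.

Section Defs.
Variables (R : realType) (N : nat).

Definition dotv (p q : 'rV[R]_N) : R := \sum_(i < N) p 0 i * q 0 i.
Definition quadf (X : 'M[R]_N) (h : 'rV[R]_N) : R := (h *m X *m h^T) 0 0.
Definition symmx (X : 'M[R]_N) : Prop := X^T = X.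

Definition subjet (v : 'rV[R]_N -> R) (x p : 'rV[R]_N) (X : 'M[R]_N) : Prop :=
  forall e : R, 0 < e -> \forall y \near x,
    v x + dotv p (y - x) + quadf X (y - x) / 2 - e * `|y - x| ^+ 2 <= v y.
Definition superjet (u : 'rV[R]_N -> R) (x p : 'rV[R]_N) (X : 'M[R]_N) : Prop :=
  forall e : R, 0 < e -> \forall y \near x,
    u y <= u x + dotv p (y - x) + quadf X (y - x) / 2 + e * `|y - x| ^+ 2.

Definition usc_within (D : set 'rV[R]_N) (u : 'rV[R]_N -> R) (x : 'rV[R]_N) : Prop :=
  forall e : R, 0 < e -> \forall y \near x, D y -> u y < u x + e.
Definition lsc_within (D : set 'rV[R]_N) (v : 'rV[R]_N -> R) (x : 'rV[R]_N) : Prop :=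
  forall e : R, 0 < e -> \forall y \near x, D y -> v x - e < v y.

Definition oper := 'rV[R]_N -> R -> 'rV[R]_N -> 'M[R]_N -> R.

Definition visc_sub (F : oper) (O : set 'rV[R]_N) (u : 'rV[R]_N -> R) : Prop :=
  (forall x, O x -> usc_within O u x) /\
  (forall x p X, O x -> symmx X -> superjet u x p X -> F x (u x) p X <= 0).
Definition visc_super (F : oper) (O : set 'rV[R]_N) (v : 'rV[R]_N -> R) : Prop :=
  (forall x, O x -> lsc_within O v x) /\
  (forall x p X, O x -> symmx X -> subjet v x p X -> 0 <= F x (v x) p X).

Definition comparison_principle (F : oper) : Prop :=
  forall O : set 'rV[R]_N, open O -> bounded_set O ->
  forall u v : 'rV[R]_N -> R,
    (forall x, closure O x -> usc_within (closure O) u x) ->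
    (forall x, closure O x -> lsc_within (closure O) v x) ->
    visc_sub F O u -> visc_super F O v ->
    (forall x, (closure O `\` O) x -> u x <= v x) ->
    forall x, O x -> u x <= v x.

Definition strong_min_principle (F : oper) : Prop :=
  forall v : 'rV[R]_N -> R, visc_super F setT v ->
    (exists x0, v x0 <= 0 /\ forall x, v x0 <= v x) ->
    forall x y, v x = v y.

Variable A : Type.
Variables (a : 'rV[R]_N -> A -> 'M[R]_N) (b : 'rV[R]_N -> A -> 'rV[R]_N)
  (c : 'rV[R]_N -> A -> R).

Definition Fset (x : 'rV[R]_N) (t : R) (p : 'rV[R]_N) (X : 'M[R]_N) : set R :=
  range (fun al : A => - \tr (a x al *m X) - dotv (b x al) p + c x al * t).

Definition Ftilde : oper := fun x t p X => sup (Fset x t p X).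

End Defs.

(* Main.v *)
Require Import Defs.
From HB Require Import structures.
From mathcomp Require Import all_boot all_order all_algebra.
From mathcomp Require Import all_classical all_reals all_analysis.
From mathcomp Require Import ring lra.
Import Order.TTheory GRing.Theory Num.Theory.
Import numFieldNormedType.Exports.
Local Open Scope classical_set_scope.
Local Open Scope ring_scope.

Lemma lsc_open (R : realType) (N : nat) (v : 'rV[R]_N -> R) (a : R) :
  (forall x, lsc_within setT v x) -> open [set y | a < v y].
Proof.
move=> hv; rewrite openE => x /= ax.
have := hv x (v x - a); rewrite subr_gt0 => /(_ ax).
apply: filterS => y /(_ I); by rewrite opprB addrC subrK.
Qed.

Lemma lsc_min (R : realType) (N : nat) (v : 'rV[R]_N -> R) (K : set 'rV[R]_N) :
  (forall x, lsc_within setT v x) -> compact K -> K !=set0 ->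
  exists2 x0, K x0 & forall y, K y -> v x0 <= v y.
Proof.
move=> hv cK [z Kz].
have cov : forall (U : nat -> set 'rV[R]_N), (forall n, open (U n)) ->
    (forall n, U n `<=` U n.+1) -> K `<=` \bigcup_n U n ->
    exists n, K `<=` U n.
  move=> U oU incU KU.
  have := (compact_near_coveringP K).1 cK nat \oo (fun n y => U n y) _.
  case.
  - move=> x Kx; have [n _ Unx] := KU x Kx.
    exists (U n, [set i | (n <= i)%N]) => /=.
    split; first by move: (oU n); rewrite openE => /(_ x Unx).
    by exists n.
    move=> [y i] /= [Uy ni].
      elim: i ni => [|i IH]; first by rewrite leqn0 => /eqP <-.
      rewrite leq_eqVlt => /orP[/eqP <- //|]; rewrite ltnS => /IH; exact: incU.
  - move=> n _ H; exists n; apply: H => /=; exact: leqnn.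
have [n0 Kn0] : exists n, K `<=` [set y | - (n%:R) < v y].
  apply: cov.
  - move=> n; exact: lsc_open.
  - move=> n y /= h; apply: le_lt_trans h; rewrite lerN2 ler_nat; exact: leqnSn.
  - move=> y _; exists (Num.truncn `|v y|).+1 => //=.
    rewrite ltrNl; apply: le_lt_trans (truncnS_gt _); rewrite -normrN; exact: ler_norm.
pose m := inf (v @` K).
have lbm : lbound (v @` K) (- (n0%:R)).
  by move=> _ [y Ky <-]; apply/ltW/Kn0.
have hinf : has_inf (v @` K) by split; [exists (v z), z | exists (- (n0%:R))].
have ge : forall y, K y -> m <= v y.
  move=> y Ky; apply: (ge_inf hinf.2); by exists y.
have [x0 Kx0 hx0] : exists2 x0, K x0 & v x0 <= m.
  apply: contrapT => hn.
  have all : forall y, K y -> m < v y.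
    move=> y Ky; rewrite ltNge; apply/negP => h; apply: hn; by exists y.
  have [n1 Kn1] : exists n, K `<=` [set y | m + (n.+1%:R)^-1 < v y].
    apply: cov.
    - move=> n; exact: lsc_open.
    - move=> n y /= h; apply: le_lt_trans h; rewrite lerD2l lef_pV2 ?posrE ?ltr0n //.
      by rewrite ler_nat.
    - move=> y Ky; have := all y Ky; rewrite -subr_gt0 => hy.
      exists (Num.truncn ((v y - m)^-1)) => //=.
      rewrite -ltrBrDl -[X in _ < X]invrK ltf_pV2 ?posrE ?invr_gt0 ?ltr0n //.
      exact: truncnS_gt.
  have : m + (n1.+1%:R)^-1 <= m.
    apply: lb_le_inf; first by exists (v z), z.
    by move=> _ [y Ky <-]; apply/ltW/Kn1.
  by rewrite gerDl leNgt invr_gt0 ltr0n.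
by exists x0 => // y Ky; apply: le_trans hx0 (ge y Ky).
Qed.
Lemma dotvZr (R : realType) (N : nat) (k : R) (p q : 'rV[R]_N) :
  dotv p (k *: q) = k * dotv p q.
Proof. rewrite /dotv mulr_sumr; apply: eq_bigr => i _; rewrite mxE; ring. Qed.

Lemma dotvZl (R : realType) (N : nat) (k : R) (p q : 'rV[R]_N) :
  dotv (k *: p) q = k * dotv p q.
Proof. rewrite /dotv mulr_sumr; apply: eq_bigr => i _; rewrite mxE; ring. Qed.

Lemma quadfZ (R : realType) (N : nat) (k : R) (X : 'M[R]_N) h :
  quadf (k *: X) h = k * quadf X h.
Proof. by rewrite /quadf -scalemxAr -scalemxAl mxE. Qed.

Lemma trZ (R : realType) (N : nat) (k : R) (B X : 'M[R]_N) :
  \tr (B *m (k *: X)) = k * \tr (B *m X).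
Proof. by rewrite -scalemxAr mxtraceZ. Qed.

Lemma symmxZ (R : realType) (N : nat) (k : R) (X : 'M[R]_N) :
  symmx X -> symmx (k *: X).
Proof.
move=> sX; apply/matrixP => i j; rewrite !mxE.
by have := congr1 (fun M : 'M[R]_N => M i j) sX; rewrite mxE => ->.
Qed.

Lemma sub_shift (R : realType) (N : nat) (A : Type)
  (a : 'rV[R]_N -> A -> 'M[R]_N) (b : 'rV[R]_N -> A -> 'rV[R]_N)
  (c : 'rV[R]_N -> A -> R) (Ro : R) (W : 'rV[R]_N -> R) (O : set 'rV[R]_N)
  (k eps : R) :
  0 < eps -> (forall x al, c x al * k <= 0) ->
  (forall x t p X, symmx X -> has_sup (Fset a b c x t p X)) ->
  (forall x, usc_within setT W x) ->
  visc_sub (Ftilde a b c) [set x | Ro < `|x|] W ->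
  O `<=` [set x | Ro < `|x|] ->
  visc_sub (Ftilde a b c) O (fun x => k + eps * W x).
Proof.
move=> eps0 hk hsup hW [_ hWs] hO; split.
  move=> x _ e e0; have := hW x (e / eps) (divr_gt0 e0 eps0).
  apply: filterS => y h Oy; have := h I => {}h.
  rewrite -addrA ltrD2l.
  have : eps * W y < eps * (W x + e / eps) by rewrite ltr_pM2l.
  by rewrite mulrDr [eps * (e / eps)]mulrC divfK ?gt_eqF.
move=> x p X Ox sX sj.
pose p' := eps^-1 *: p; pose X' := eps^-1 *: X.
have sX' : symmx X' by exact: symmxZ.
have sj' : superjet W x p' X'.
  move=> e e0; have := sj (eps * e) (mulr_gt0 eps0 e0).
  apply: filterS => y h.
  rewrite /p' /X' dotvZl quadfZ.
  move: h; set d := dotv p (y - x); set q := quadf X (y - x); set n := `|y - x| ^+ 2 => h.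
  rewrite -(ler_pM2l eps0).
  have -> : eps * (W x + eps^-1 * d + eps^-1 * q / 2 + e * n) =
     eps * W x + d + q / 2 + eps * e * n by field; rewrite gt_eqF.
  lra.
have hF := hWs x p' X' (hO x Ox) sX' sj'.
rewrite /Ftilde; apply: ge_sup.
  have [[_ [al _ _]] _] := hsup x (k + eps * W x) p X sX.
  by eexists; exists al.
move=> _ [al _ <-].
have hle := sup_upper_bound (hsup x (W x) p' X' sX')
   (ex_intro2 _ _ al I erefl).
move: hle hF; rewrite /Ftilde /p' /X' trZ dotvZr => hle hF.
move: (hk x al).
set T := \tr (a x al *m X); set D := dotv (b x al) p; set C := c x al.
move=> hk'.
have h2 : eps * (- (eps^-1 * T) - eps^-1 * D + C * W x) <= 0.
  by apply: mulr_ge0_le0; [exact: ltW | exact: le_trans hF].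
have h3 : eps * (- (eps^-1 * T) - eps^-1 * D + C * W x) = - T - D + eps * (C * W x).
  by field; rewrite gt_eqF.
rewrite h3 in h2.
have -> : - T - D + C * (k + eps * W x) = (- T - D + eps * (C * W x)) + C * k by ring.
lra.
Qed.

Lemma usc_shift (R : realType) (N : nat) (W : 'rV[R]_N -> R) (k eps : R)
  (D : set 'rV[R]_N) x :
  0 < eps -> (forall x, usc_within setT W x) ->
  usc_within D (fun x => k + eps * W x) x.
Proof.
move=> eps0 hW e e0; have := hW x (e / eps) (divr_gt0 e0 eps0).
apply: filterS => y h Oy; have := h I => {}h.
rewrite -addrA ltrD2l.
have : eps * W y < eps * (W x + e / eps) by rewrite ltr_pM2l.
by rewrite mulrDr [eps * (e / eps)]mulrC divfK ?gt_eqF.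
Qed.

Lemma lsc_restrict (R : realType) (N : nat) (v : 'rV[R]_N -> R)
  (D : set 'rV[R]_N) x :
  lsc_within setT v x -> lsc_within D v x.
Proof. by move=> h e e0; apply: filterS (h e e0) => y hy _; exact: hy. Qed.

Lemma super_restrict (R : realType) (N : nat) (F : oper R N)
  (O : set 'rV[R]_N) v :
  visc_super F setT v -> visc_super F O v.
Proof.
move=> [h1 h2]; split; first by move=> x _; apply: lsc_restrict; exact: h1.
by move=> x p X _; exact: h2.
Qed.

Lemma open_norm_lt (R : realType) (N : nat) (r : R) :
  open [set x : 'rV[R]_N | `|x| < r].
Proof.
have := @open_comp _ _ (fun x : 'rV[R]_N => `|x|) [set s : R | s < r].
apply; first by move=> *; exact: norm_continuous.
exact: open_lt.
Qed.

Lemma open_norm_gt (R : realType) (N : nat) (r : R) :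
  open [set x : 'rV[R]_N | r < `|x|].
Proof.
have := @open_comp _ _ (fun x : 'rV[R]_N => `|x|) [set s : R | r < s].
apply; first by move=> *; exact: norm_continuous.
exact: open_gt.
Qed.

Lemma closure_annulus (R : realType) (N : nat) (R1 R2 : R) (x : 'rV[R]_N) :
  closure [set x : 'rV[R]_N | R1 < `|x| /\ `|x| < R2] x ->
  R1 <= `|x| /\ `|x| <= R2.
Proof.
move=> cl; split; rewrite leNgt; apply/negP => hx.
- have := @open_norm_lt R N R1; rewrite openE => /(_ x hx) nb.
  have [z [[hz _] hz']] := cl _ nb.
  by move: hz'; rewrite /= ltNge (ltW hz).
- have := @open_norm_gt R N R2; rewrite openE => /(_ x hx) nb.
  have [z [[_ hz] hz']] := cl _ nb.
  by move: hz'; rewrite /= ltNge (ltW hz).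
Qed.

Lemma bounded_norm (R : realType) (N : nat) (B : set 'rV[R]_N) (r : R) :
  (forall x, B x -> `|x| <= r) -> bounded_set B.
Proof.
move=> hB; rewrite /= /bounded_near.
exists r; split; first exact: num_real.
move=> M hM x Bx /=; apply: le_trans (hB x Bx) _; exact: ltW.
Qed.

Arguments lsc_min {R N v K}.
Arguments sub_shift {R N A a b c Ro W O k eps}.
Arguments usc_shift {R N W k eps D x}.
Arguments lsc_restrict {R N v D x}.
Arguments super_restrict {R N F O v}.
Arguments closure_annulus {R N R1 R2 x}.

Theorem theorem2p3 (R : realType) (N : nat) (A : pseudoMetricType R)
  (a : 'rV[R]_N -> A -> 'M[R]_N) (b : 'rV[R]_N -> A -> 'rV[R]_N)
  (c : 'rV[R]_N -> A -> R) (Ro : R) (W : 'rV[R]_N -> R) (v : 'rV[R]_N -> R) :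
  hausdorff_space A ->
  (forall x al, symmx (a x al)) ->
  continuous (fun z : 'rV[R]_N * A => a z.1 z.2) ->
  continuous (fun z : 'rV[R]_N * A => b z.1 z.2) ->
  continuous (fun z : 'rV[R]_N * A => c z.1 z.2) ->
  (* (i) *)
  (forall x t p X, symmx X -> has_sup (Fset a b c x t p X)) ->
  {within [set z : 'rV[R]_N * R * 'rV[R]_N * 'M[R]_N | symmx z.2],
     continuous (fun z : 'rV[R]_N * R * 'rV[R]_N * 'M[R]_N =>
                   Ftilde a b c z.1.1.1 z.1.1.2 z.1.2 z.2)} ->
  (forall x al, 0 <= c x al) ->
  comparison_principle (Ftilde a b c) ->
  (* (ii) *)
  strong_min_principle (Ftilde a b c) ->
  (* (iii) *)
  0 <= Ro ->
  (forall x, usc_within setT W x) ->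
  visc_sub (Ftilde a b c) [set x | Ro < `|x|] W ->
  (forall M : R, exists Rm : R, forall x, Rm < `|x| -> W x < M) ->
  (* v *)
  (forall x, lsc_within setT v x) ->
  visc_super (Ftilde a b c) setT v ->
  (forall e : R, 0 < e -> exists Rm : R, forall x, Rm < `|x| -> v x / W x <= e) ->
  ((forall x, v x <= 0) \/ (forall x al, c x al = 0)) ->
  forall x y, v x = v y.
Proof.
move=> _ _ _ _ _ hsup _ hc0 hcp hsmp hRo hWusc hWsub hWinf hvlsc hvsup hvW hcase.
have [Rw hRw] := hWinf 0.
pose R1 := `|Rw| + Ro + 1.
have R1w : Rw < R1.
  rewrite /R1; have := ler_norm Rw; lra.
have R1o : Ro < R1.
  rewrite /R1; have := normr_ge0 Rw; lra.
pose K := [set x : 'rV[R]_N | `|x| <= R1].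
have cK : compact K.
  apply: bounded_closed_compact; first exact: (@bounded_norm _ _ _ R1).
  have := @preimage_closed _ _ (fun x : 'rV[R]_N => `|x|) [set s : R | s <= R1].
  apply; first by move=> *; exact: norm_continuous.
  exact: closed_le.
have K0 : K 0 by rewrite /K /= normr0; lra.
have [x0 Kx0 hx0] := lsc_min hvlsc cK (ex_intro _ 0 K0).
pose m := v x0.
have hk : forall x al, c x al * m <= 0.
  move=> z al; case: hcase => [h|h]; last by rewrite h mul0r.
  exact: mulr_ge0_le0 (hc0 z al) (h x0).
have key : forall y, m <= v y.
  move=> y; have [hy|hy] := leP `|y| R1; first exact: hx0.
  rewrite leNgt; apply/negP => hvy.
  have dpos : 0 < m - v y by rewrite subr_gt0.
  have w1 : 0 < `|W y| + 1 by have := normr_ge0 (W y); lra.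
  pose eps := (m - v y) / (`|W y| + 1).
  have eps0 : 0 < eps by exact: divr_gt0.
  have [R2a hR2a] := hvW (eps / 2) (divr_gt0 eps0 (ltr0Sn _ 1)).
  have [R2b hR2b] := hWinf (- (2 * `|m| / eps)).
  pose R2 := `|y| + `|R2a| + `|R2b| + 1.
  pose O := [set x : 'rV[R]_N | R1 < `|x| /\ `|x| < R2].
  have OR : O `<=` [set x | Ro < `|x|] by move=> z [h _] /=; lra.
  have usub := sub_shift eps0 hk hsup hWusc hWsub OR.
  have oO : open O.
    rewrite (_ : O = [set x | R1 < `|x|] `&` [set x | `|x| < R2]) //.
    by apply: openI; [exact: open_norm_gt | exact: open_norm_lt].
  have bO : bounded_set O by apply: (@bounded_norm _ _ _ R2) => z [_ h]; exact: ltW.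
  have Oy : O y.
    split => //; rewrite /R2; have := normr_ge0 R2a; have := normr_ge0 R2b; lra.
  have := hcp O oO bO (fun x => m + eps * W x) v
     (fun x _ => usc_shift eps0 hWusc)
     (fun x _ => lsc_restrict (hvlsc x)) usub (super_restrict hvsup) _ y Oy.
  move=> hcmp.
  have hb : forall z, (closure O `\` O) z -> m + eps * W z <= v z.
    move=> z [clz nOz]; have [h1 h2] := closure_annulus clz.
    have [e1|e1] : `|z| = R1 \/ `|z| = R2.
      case: (ltP R1 `|z|) => h3.
        right; apply/eqP; rewrite eq_le h2 /= leNgt; apply/negP => h4.
        exact: nOz (conj h3 h4).
      by left; apply/eqP; rewrite eq_le h1 andbT.
    - have Kz : K z by rewrite /K /= e1.
      have := hx0 z Kz; rewrite -/m => hmz.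
      have wz : W z < 0 by apply: hRw; rewrite e1.
      have : eps * W z < 0 by rewrite pmulr_rlt0.
      lra.
    - have hv := hR2a z _; have hw := hR2b z _.
      have : R2a < `|z| /\ R2b < `|z|.
        rewrite e1 /R2; have := ler_norm R2a; have := ler_norm R2b.
        have := normr_ge0 y; have := normr_ge0 R2a; have := normr_ge0 R2b; lra.
      move=> [/hv {}hv /hw {}hw].
      have wneg : W z < 0.
        apply: lt_le_trans hw _; rewrite oppr_le0; apply: divr_ge0; last exact: ltW.
        by apply: mulr_ge0 => //; exact: normr_ge0.
      have h5 : eps / 2 * W z <= v z.
        by have := ler_wnM2r (ltW wneg) hv; rewrite divfK ?lt_eqF.
      have h6 : eps * W z < - (2 * `|m|).
        have : eps * W z < eps * (- (2 * `|m| / eps)) by rewrite ltr_pM2l.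
        have -> : eps * (- (2 * `|m| / eps)) = - (2 * `|m|) by field; rewrite gt_eqF.
        by [].
      have := ler_norm m; lra.
  have h := hcmp hb.
  have h1 : eps * `|W y| < m - v y.
    rewrite /eps mulrAC ltr_pdivrMr //.
    by rewrite ltr_pM2l // ltrDl.
  have h2 : - (eps * `|W y|) <= eps * W y.
    rewrite -mulrN ler_pM2l //.
    by have := ler_norml (W y) `|W y|; rewrite lexx => /esym/andP[].
  lra.
case: hcase => [vle0 | c0] x y.
  by apply: hsmp hvsup _ x y; exists x0; split; [exact: vle0 | exact: key].
have hs : visc_super (Ftilde a b c) setT (fun z => v z - m).
  split.
    move=> z _ e e0; have := hvlsc z e e0; apply: filterS => u hu _.
    have := hu I; lra.
  move=> z p X _ sX sj.
  have sj' : subjet v z p X.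
    by move=> e e0; have := sj e e0; apply: filterS => u hu; lra.
  have := hvsup.2 z p X I sX sj'.
  rewrite (_ : Ftilde a b c z (v z - m) p X = Ftilde a b c z (v z) p X) //.
  rewrite /Ftilde /Fset; congr sup.
  by apply/seteqP; split => _ [al _ <-]; exists al => //; rewrite !c0 !mul0r.
have h : (fun z => v z - m) x = (fun z => v z - m) y.
  apply: (hsmp _ hs); exists x0; split; first by rewrite subrr.
  by move=> z; rewrite lerD2r; exact: key.
by move: h => /(congr1 (fun t => t + m)); rewrite !subrK.
Qed.
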